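(* Let $G$ be a group of order $128$. Then $\operatorname{rdim}(G) \le 10$.
   Context: $\operatorname{rdim}(G)$ is the minimal dimension of a faithful complex linear representation of $G$. *)

(* Defs.v *)
From mathcomp Require Import all_boot all_algebra all_fingroup all_solvable all_field all_character.
Set Implicit Arguments. Unset Strict Implicit. Unset Printing Implicit Defensive.

(* Complex numbers are modelled by MathComp's algC (algebraic complex
   numbers), the standard field for character/representation theory of
   finite groups. *)
Definition has_faithful_rep (gT : finGroupType) (G : {group gT}) (n : nat) : Prop :=
  exists rG : mx_representation algC G n, mx_faithful rG.

Definition rdim_le (gT : finGroupType) (G : {group gT}) (m : nat) : Prop :=
  exists2 n, (n <= m)%N & has_faithful_rep G n.

(* Main.v *)
Require Import Defs.
From mathcomp Require Import all_boot all_algebra all_fingroup all_solvable all_field all_character.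
From mathcomp Require Import zify ring.
Set Implicit Arguments. Unset Strict Implicit. Unset Printing Implicit Defensive.
Import GRing.Theory Num.Theory.

Lemma ar1 c d : c %| 128 -> d %| 128 -> d * d * c <= 128 -> c != 8 ->
  logn 2 c * d <= 10.
Proof.
move=> hc hd; rewrite dvdn_divisors // in hc; rewrite dvdn_divisors // in hd.
have H : all (fun c => all (fun d => (d * d * c <= 128) ==> (c != 8) ==> (logn 2 c * d <= 10))
   (divisors 128)) (divisors 128) by [].
by move/allP: H => /(_ c hc) /allP /(_ d hd) /implyP H1 H2 H3; move: (H1 H2) => /implyP; apply.
Qed.

Lemma ar2 d : d %| 128 -> d * d * 8 <= 128 -> d <= 4.
Proof.
move=> hd; rewrite dvdn_divisors // in hd.
have H : all (fun d => (d * d * 8 <= 128) ==> (d <= 4)) (divisors 128) by [].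
by move/allP: H => /(_ d hd) /implyP.
Qed.

Lemma ar3 d : d %| 128 -> d * d * 8 <= 128 -> 2 < d -> d = 4.
Proof.
move=> hd; rewrite dvdn_divisors // in hd.
have H : all (fun d => (d * d * 8 <= 128) ==> (2 < d) ==> (d == 4)) (divisors 128) by [].
by move/allP: H => /(_ d hd) /implyP H1 H2 H3; apply/eqP; move: (H1 H2) => /implyP; apply.
Qed.

Lemma ar4 c : c %| 8 -> c != 8 -> logn 2 c <= 2.
Proof.
move=> hc; rewrite dvdn_divisors // in hc.
have H : all (fun c => (c != 8) ==> (logn 2 c <= 2)) (divisors 8) by [].
by move/allP: H => /(_ c hc) /implyP.
Qed.

Lemma sum_le_size (T : eqType) (s : seq T) (g : T -> nat) B :
  (forall x, x \in s -> g x <= B) -> \sum_(x <- s) g x <= size s * B.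
Proof.
elim: s => [|a s IH] H; first by rewrite big_nil.
rewrite big_cons /= mulSn leq_add ?H ?mem_head // IH // => x xs.
by apply: H; rewrite in_cons xs orbT.
Qed.

Lemma sum_bound (T : eqType) (s : seq T) (f : T -> nat) m B :
  size s <= m -> (forall x, x \in s -> f x * m <= B) -> \sum_(x <- s) f x <= B.
Proof.
case: m => [|m] hs H.
  by move: hs; rewrite leqn0 => /nilP ->; rewrite big_nil.
rewrite -(leq_pmul2r (ltn0Sn m)) big_distrl /=.
apply: leq_trans (sum_le_size H) _.
by rewrite mulnC leq_mul2l hs orbT.
Qed.
Section GroupAlg.
Local Open Scope group_scope.
Lemma comm_sq (gT : finGroupType) (x y : gT) :
  commute ((y ^+ 2)^-1) x -> [~ x, y] = (x ^+ 2)^-1 * (y ^+ 2)^-1 * (x * y) ^+ 2.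
Proof.
move=> hc; rewrite !expgS !expg0 !mulg1 !invMg.
rewrite -!mulgA; congr (_ * _).
have hc' : y^-1 * y^-1 * x = x * (y^-1 * y^-1).
  by move: hc; rewrite !expgS expg0 mulg1 invMg.
rewrite [y^-1 * (y^-1 * _)]mulgA [y^-1 * y^-1 * _]mulgA hc' -mulgA mulKg.
by rewrite /conjg -mulgA mulKg.
Qed.
Lemma sq_mul (gT : finGroupType) (x w : gT) :
  commute [~ w, x] w -> (x * w) ^+ 2 = x ^+ 2 * w ^+ 2 * [~ w, x].
Proof.
move=> hc; rewrite !expgS !expg0 !mulg1; set c := [~ w, x].
rewrite -!mulgA; congr (_ * _); rewrite (mulgA w x w) (commgC w x) -/c.
by rewrite -(mulgA (x * w) c w) hc !mulgA.
Qed.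

End GroupAlg.

Local Open Scope ring_scope.

Lemma greedy (gT : finGroupType) (G K : {group gT}) :
  (2.-group G)%g -> K \subset G -> exists s : seq (Iirr G),
    (size s <= logn 2 #|K|)%N /\ K :&: \bigcap_(i <- s) cfker 'chi[G]_i = 1%g.
Proof.
move=> pG; have [n] := ubnP #|K|; elim: n K => // n IH K ltKn sKG.
have [->|ntK] := eqsVneq K 1%G.
  by exists [::]; rewrite big_nil setIT.
have [i Ki] : exists i, ~~ (K \subset cfker 'chi[G]_i).
  apply/existsP; apply: contraR ntK => /existsPn H.
  rewrite -subG1 -(TI_cfker_irr G); apply/bigcapsP => i _; exact: negbNE (H i).
pose K' := (K :&: cfker 'chi[G]_i)%G.
have pK : K' \proper K by rewrite properE subsetIl subsetI subxx.
have ltK := proper_card pK.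
have [s [hs1 hs2]] := IH K' (leq_trans ltK (ltnSE ltKn)) (subset_trans (subsetIl _ _) sKG).
exists (i :: s); split.
  rewrite /= (leq_ltn_trans hs1) //.
  have pK2 : (2.-group K)%g := pgroupS sKG pG.
  have pK'2 : (2.-group K')%g := pgroupS (subset_trans (subsetIl _ _) sKG) pG.
  by rewrite -(@ltn_exp2l 2) // -(card_pgroup pK2) -(card_pgroup pK'2).
by rewrite big_cons setIA.
Qed.

Lemma deg_facts (gT : finGroupType) (G : {group gT}) (i : Iirr G) :
  'chi_i 1%g = (Num.truncn ('chi_i 1%g))%:R /\ (Num.truncn ('chi_i 1%g) %| #|G|)%N /\
  (Num.truncn ('chi_i 1%g) * Num.truncn ('chi_i 1%g) * #|'Z(G)%g| <= #|G|)%N.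
Proof.
set d := Num.truncn _.
have E : 'chi_i 1%g = d%:R by rewrite truncnK ?Cnat_irr1.
split; first exact: E.
split; first by have := dvd_irr1_cardG i; rewrite E dvdC_nat.
have sZ : 'Z(G)%g \subset 'Z('chi_i)%CF by rewrite -cap_cfcenter_irr (bigcap_inf i).
have h1 := (irr1_bound i).1; rewrite E -natrX ler_nat in h1.
have h2 : (#|G : 'Z('chi_i)%CF|%g <= #|G : 'Z(G)|%g)%N.
  by apply: dvdn_leq; [ | exact: indexgS].
rewrite -(Lagrange (center_sub G)) mulnC leq_mul2l; apply/orP; right.
by rewrite mulnn; apply: leq_trans h1 h2.
Qed.

Lemma subset_bigcap_seq (T : finType) (I : eqType) (s : seq I) (A : {set T}) (B : I -> {set T}) :
  (forall i, i \in s -> A \subset B i) -> A \subset \bigcap_(i <- s) B i.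
Proof.
elim: s => [|a s IH] H; first by rewrite big_nil subsetT.
rewrite big_cons subsetI H ?mem_head // IH // => i si.
by apply: H; rewrite in_cons si orbT.
Qed.

Lemma assemble (gT : finGroupType) (G : {group gT}) (s : seq (Iirr G)) :
  (2.-group G)%g -> 'Ohm_1('Z(G))%g :&: \bigcap_(i <- s) cfker 'chi[G]_i = 1%g ->
  (\sum_(i <- s) Num.truncn ('chi[G]_i 1%g) <= 10)%N -> rdim_le G 10.
Proof.
move=> pG hker hdeg.
pose th := \sum_(i <- s) 'chi[G]_i.
have Nth : th \is a character by apply: rpred_sum => i _; exact: irr_char.
have [[n rG] Eth] : exists rG : representation algC G, th = cfRepr rG by apply/char_reprP.
exists n; last (exists rG).
  have : th 1%g = n%:R by rewrite Eth cfRepr1.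
  rewrite sum_cfunE -(sum_truncnK _ (fun i _ => Cnat_irr1 i)) => /eqP.
  by rewrite eqr_nat => /eqP <-.
rewrite /mx_faithful -cfker_repr -Eth.
have sK : cfker th :&: 'Ohm_1('Z(G))%g \subset [1 gT]%g.
  rewrite -hker setIC setIS //; apply: subset_bigcap_seq => i si.
  apply: cfker_constt => //.
  rewrite inE cfdot_suml (big_rem i) //= cfdot_irr eqxx.
  rewrite lt0r_neq0 // ltr_wpDr ?ltr01 // sumr_ge0 // => j _.
  by rewrite cfdot_irr ler0n.
have TI : cfker th :&: 'Z(G)%g = 1%g by apply: TI_Ohm1; apply/trivgP.
apply/trivgP/eqP; apply: contraT => nt.
have := meet_center_nil (pgroup_nil pG) (cfker_normal th) nt.
by rewrite TI eqxx.
Qed.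

Lemma bad_case (gT : finGroupType) (G : {group gT}) : #|G| = 128%N -> #|'Z(G)%g| = 8%N ->
  (forall z, z \in 'Z(G)%g -> (z ^+ 2 = 1)%g) ->
  (forall i : Iirr G, ~~ ('Z(G)%g \subset cfker 'chi[G]_i) -> (2 < Num.truncn ('chi_i 1%g))%N) ->
  False.
Proof.
move=> oG oZ zsq hbad.
have sZG : 'Z(G)%g \subset G := center_sub G.
have oGZ : #|G : 'Z(G)|%g = 16%N.
  by have := Lagrange sZG; rewrite oG oZ => /eqP; rewrite -[128%N]/(8 * 16)%N eqn_mul2l /= => /eqP.
have hB i : ~~ ('Z(G)%g \subset cfker 'chi[G]_i) ->
    [/\ 'Z('chi_i)%CF = 'Z(G)%g, 'chi_i \in 'CF(G, 'Z(G)%g) & 'chi_i 1%g = 4%:R].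
  move=> hi; have [E [dv le]] := deg_facts i.
  rewrite oG oZ in dv le.
  have d4 := ar3 dv le (hbad i hi).
  rewrite d4 in E.
  have sZc : 'Z(G)%g \subset 'Z('chi_i)%CF by rewrite -cap_cfcenter_irr (bigcap_inf i).
  have h2 : (#|G : 'Z('chi_i)%CF|%g <= 16)%N.
    by rewrite -oGZ; apply: dvdn_leq; [ | exact: indexgS].
  have h1 := (irr1_bound i).1; rewrite E -natrX ler_nat in h1.
  have hidx : #|G : 'Z('chi_i)%CF|%g = 16%N by apply/eqP; rewrite eqn_leq h2 h1.
  have eZ : 'Z('chi_i)%CF = 'Z(G)%g.
    apply/eqP; rewrite eq_sym eqEcard sZc /=.
    have := Lagrange (cfcenter_sub 'chi_i); rewrite oG hidx oZ => /eqP.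
    by rewrite -[128%N]/(8 * 16)%N eqn_mul2r /= => /eqP ->.
  split; [exact: eZ | | exact: E].
  rewrite -eZ -(irr1_bound i).2 E hidx -natrX.
  done.
have hsumZ i : \sum_(z in 'Z(G)%g) 'chi[G]_i z =
    if 'Z(G)%g \subset cfker 'chi_i then 'chi_i 1%g *+ 8 else 0.
  case: ifPn => hi.
    rewrite -oZ -sumr_const; apply: eq_bigr => z hz; apply: cfker1.
    exact: (subsetP hi).
  have [eZ _ _] := hB i hi; have [lam Llam Elam] := cfcenter_Res 'chi_i.
  have hz z : z \in 'Z(G)%g -> 'chi_i z = 'chi_i 1%g * lam z.
    rewrite -eZ => hz0; rewrite -(cfResE _ (cfcenter_sub _) hz0) Elam cfunE //.
  rewrite (eq_bigr _ hz) -mulr_sumr.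
  have [j Ej] := irrP (lin_char_irr Llam).
  have -> : \sum_(z in 'Z(G)%g) lam z = #|'Z('chi_i)%CF|%:R * '[lam, 1].
    rewrite cfdotE mulrA divff ?pnatr_eq0 -?lt0n ?cardG_gt0 // mul1r -eZ.
    by apply: eq_bigr => z hz1; rewrite cfun1E hz1 conjC1 mulr1.
  rewrite Ej -(irr0 [group of 'Z('chi_i)%CF]) cfdot_irr.
  case: eqP => [j0|]; last by rewrite !mulr0.
  case/negP: hi; apply/subsetP => z hzZ; rewrite cfkerEirr inE hz //.
  have : z \in 'Z('chi_i)%CF by rewrite eZ.
  by rewrite Ej j0 irr0 cfun1E => ->; rewrite mulr1.
have hA : \sum_(i | 'Z(G)%g \subset cfker 'chi[G]_i) ('chi_i 1%g) ^+ 2 = 16%:R.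
  have hreg : \sum_(z in 'Z(G)%g) cfReg G z = 128%:R.
    rewrite (bigD1 1%g) ?group1 //= cfRegE eqxx oG big1 ?addr0 // => z /andP[_ nz].
    by rewrite cfRegE (negbTE nz).
  have : \sum_i 'chi[G]_i 1%g * \sum_(z in 'Z(G)%g) 'chi_i z = 128%:R.
    rewrite -hreg cfReg_sum; under [RHS]eq_bigr do rewrite sum_cfunE.
    rewrite exchange_big /=; apply: eq_bigr => i _; rewrite mulr_sumr.
    by apply: eq_bigr => z _; rewrite cfunE.
  under eq_bigr do rewrite hsumZ.
  have -> : \sum_i 'chi[G]_i 1%g * (if 'Z(G)%g \subset cfker 'chi_i then 'chi_i 1%g *+ 8 else 0)
      = (\sum_(i | 'Z(G)%g \subset cfker 'chi[G]_i) ('chi_i 1%g) ^+ 2) * 8%:R.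
    rewrite mulr_suml [RHS]big_mkcond; apply: eq_bigr => i _.
    case: ifP => _; last by rewrite mulr0.
    by rewrite !mulrnAr expr2 mulr1.
  rewrite -[128%N]/(16 * 8)%N natrM; apply: mulIf.
  by rewrite pnatr_eq0.
have hC g : g \in G -> g \notin 'Z(G)%g -> (#|'C_G[g]|%g <= 16)%N.
  move=> Gg nZg.
  have := second_orthogonality_relation g Gg; rewrite class_refl mulr1n => E.
  rewrite -(ler_nat algC) -E -hA [X in _ <= X]big_mkcond; apply: ler_sum => i _.
  case: ifPn => hi.
    rewrite -normCK expr2.
    have h := char1_ge_norm g (irr_char i).
    by apply: ler_pM => //; apply: normr_ge0.
  have [_ hon _] := hB i hi.
  by rewrite (cfun_on0 hon nZg) mul0r.
have cZ z x : z \in 'Z(G)%g -> x \in G -> commute z x.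
  by case/setIP=> _ /centP h /h /commute_sym.
have nZG : G \subset 'N('Z(G))%g := normal_norm (center_normal G).
have hC2 g : g \in G -> g \notin 'Z(G)%g -> #|'C_G[g]|%g = 16%N /\ (g ^+ 2)%g \in 'Z(G)%g.
  move=> Gg nZg.
  have sZC : 'Z(G)%g \subset 'C_G[g]%g.
    rewrite subsetI sZG; apply/subsetP => z hz; apply/cent1P; exact: cZ.
  have Cg : g \in 'C_G[g]%g := subcent1_id Gg.
  have pZC : 'Z(G)%g \proper 'C_G[g]%g.
    by rewrite properE sZC; apply/negP => /subsetP /(_ g Cg); apply/negP.
  have d8 := cardSg sZC; have lt8 := proper_card pZC; have le16 := hC g Gg nZg.
  rewrite oZ in d8 lt8.
  have oC : #|'C_G[g]|%g = 16%N.
    case/dvdnP: d8 => k hk; rewrite hk in lt8 le16 *.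
    by lia.
  split => //.
  have nZC : 'C_G[g]%g \subset 'N('Z(G))%g := subset_trans (subsetIl _ _) nZG.
  have oq : #|('C_G[g] / 'Z(G))%g| = 2%N.
    rewrite card_quotient //; have := Lagrange sZC; rewrite oC oZ => /eqP.
    by rewrite -[16%N]/(8 * 2)%N eqn_mul2l /= => /eqP.
  have Ng : g \in 'N('Z(G))%g := subsetP nZG g Gg.
  apply: coset_idr; first exact: groupX.
  rewrite morphX //=; have := expg_cardG (mem_quotient 'Z(G)%g Cg).
  by rewrite oq.
have sq u : u \in G -> (u ^+ 2)%g \in 'Z(G)%g.
  move=> Gu; case: (boolP (u \in 'Z(G)%g)) => hu; first exact: groupX.
  exact: (hC2 u Gu hu).2.
have c2 x y : x \in G -> y \in G -> [~ x, y]%g \in 'Z(G)%g.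
  move=> Gx Gy; rewrite comm_sq; last by apply: cZ => //; rewrite groupV sq.
  by apply: groupM; [apply: groupM; rewrite groupV; exact: sq | apply: sq; exact: groupM].
have mulc w a b : w \in G -> a \in G -> b \in G -> [~ w, a * b]%g = ([~ w, a] * [~ w, b])%g.
  move=> Gw Ga Gb; rewrite commgMJ conjgE.
  have hc : commute [~ w, a]%g b := cZ _ _ (c2 w a Gw Ga) Gb.
  rewrite hc mulKg; apply/esym/cZ; [exact: c2 | exact: (subsetP sZG _ (c2 _ _ Gw Gb))].
have surj w : w \in G -> w \notin 'Z(G)%g -> forall z, z \in 'Z(G)%g ->
    exists2 x, x \in G & [~ w, x]%g = z.
  move=> Gw nZw z Zz.
  have fM : {in G &, {morph (fun x => [~ w, x]%g) : a b / (a * b)%g}}.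
    by move=> a b Ga Gb /=; apply: mulc.
  pose f := Morphism fM.
  have sfZ : (f @* G)%g \subset 'Z(G)%g.
    by apply/subsetP => y /morphimP[x _ Gx ->]; apply: c2.
  have sK : ('ker f)%g \subset 'C_G[w]%g.
    apply/subsetP => x Kx; have Gx : x \in G := dom_ker Kx.
    rewrite inE Gx; apply/cent1P/commute_sym.
    by apply/commgP; rewrite -[[~ w, x]%g]/(f x) (mker Kx).
  have oC := (hC2 w Gw nZw).1.
  have iC : #|G : 'C_G[w]|%g = 8%N.
    have := Lagrange (subsetIl G 'C[w]%g); rewrite oC oG => /eqP.
    by rewrite -[128%N]/(16 * 8)%N eqn_mul2l /= => /eqP.
  have ge8 : (8 <= #|(f @* G)%g|)%N.
    rewrite card_morphim setIid -iC; apply: dvdn_leq; first exact: indexg_gt0.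
    exact: indexgS.
  have eZ : (f @* G)%g = 'Z(G)%g by apply/eqP; rewrite eqEcard sfZ oZ ge8.
  by rewrite -eZ in Zz; case/morphimP: Zz => x _ Gx ->; exists x.
have linZ j : 'chi['Z(G)%g]_j \is a linear_char.
  by apply/char_abelianP; exact: center_abelian.
have lsq j u : u \in 'Z(G)%g -> 'chi['Z(G)%g]_j u * 'chi['Z(G)%g]_j u = 1.
  by move=> hu; have e := zsq u hu; rewrite expgS expg1 in e; rewrite -lin_charM // e lin_char1.
have reidx (F : gT -> algC) x : x \in G -> \sum_(y in G) F y = \sum_(w in G) F (x * w)%g.
  move=> Gx; rewrite (reindex_inj (mulgI x)) /=; apply: eq_bigl => w.
  by rewrite groupMl.
have nz j : j != 0 -> exists2 z, z \in 'Z(G)%g & 'chi['Z(G)%g]_j z != 1.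
  move=> nj; apply/exists_inP; apply: contraR nj => /exists_inPn H.
  apply/eqP; apply: irr_inj; rewrite /= irr0; apply/cfun_inP => z hz.
  by rewrite cfun1E hz; apply/eqP; exact: negbNE (H z hz).
pose T j := \sum_(x in G) 'chi['Z(G)%g]_j (x ^+ 2)%g.
have T2 j : j != 0 -> T j ^+ 2 = 1024%:R.
  move=> nj; rewrite expr2 {1}/T mulr_suml.
  have step x : x \in G -> 'chi['Z(G)%g]_j (x ^+ 2)%g * T j =
      \sum_(w in G) 'chi['Z(G)%g]_j (w ^+ 2)%g * 'chi['Z(G)%g]_j [~ w, x]%g.
    move=> Gx; rewrite /T (reidx _ x Gx) mulr_sumr; apply: eq_bigr => w Gw.
    rewrite sq_mul; last by apply: cZ => //; exact: c2.
    have h1 := sq x Gx; have h2 := sq w Gw; have h3 := c2 w x Gw Gx.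
    rewrite (lin_charM (linZ j) (groupM h1 h2) h3) (lin_charM (linZ j) h1 h2).
    by rewrite !mulrA lsq // mul1r.
  rewrite (eq_bigr _ step) exchange_big /=.
  have inner w : w \in G -> 'chi['Z(G)%g]_j (w ^+ 2)%g *
      (\sum_(x in G) 'chi['Z(G)%g]_j [~ w, x]%g) = if w \in 'Z(G)%g then 128%:R else 0.
    move=> Gw; case: ifPn => hw.
      rewrite zsq // lin_char1 // mul1r -oG -sumr_const; apply: eq_bigr => x Gx.
      have -> : [~ w, x]%g = 1%g by apply/eqP/commgP; apply: cZ.
      by rewrite lin_char1.
    have [z0 Zz0 nz0] := nz j nj; have [x0 Gx0 e0] := surj w Gw hw z0 Zz0.
    set S := \sum_(x in G) _.
    have : S = 'chi['Z(G)%g]_j z0 * S.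
      rewrite {1}/S (reidx _ x0 Gx0) mulr_sumr; apply: eq_bigr => x Gx.
      by rewrite mulc // -e0 lin_charM ?c2.
    move/eqP; rewrite -subr_eq0 -{1}[S]mul1r -mulrBl mulf_eq0 subr_eq0 eq_sym (negbTE nz0) /=.
    by move/eqP ->; rewrite mulr0.
  under eq_bigr do rewrite -mulr_sumr.
  rewrite (eq_bigr _ (fun w => inner w)) -big_mkcondr /=.
  rewrite (eq_bigl (fun w => w \in 'Z(G)%g)); last first.
    by move=> w; rewrite /= andb_idl // => /(subsetP sZG).
  by rewrite sumr_const oZ -mulrnA.
have colsum u : u \in 'Z(G)%g -> \sum_j 'chi['Z(G)%g]_j u = 8%:R *+ (u == 1%g).
  move=> Zu; have := second_orthogonality_relation u (group1 'Z(G)%G).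
  under eq_bigr do rewrite lin_char1 // conjC1 mulr1.
  rewrite class1G inE => ->.
  case: eqP => [->|]; last by rewrite !mulr0n.
  by rewrite cent11T setIT oZ.
pose N1 := (\sum_(x in G) ((x ^+ 2)%g == 1%g))%N.
have sumT : \sum_j T j = 8%:R *+ N1.
  rewrite /T exchange_big /= /N1 -sumrMnr; apply: eq_bigr => x Gx.
  exact: colsum (sq x Gx).
have d8 : (8 %| N1)%N.
  have [/eqP cov tI _] := and3P (rcosets_partition sZG).
  rewrite /N1 -{1}cov big_trivIset //.
  apply: dvdn_sum => A /rcosetsP[y Gy ->].
  have e x : x \in ('Z(G) :* y)%g -> ((x ^+ 2)%g == 1%g) = ((y ^+ 2)%g == 1%g).
    case/rcosetP => z Zz ->; rewrite expgMn ?(zsq z Zz) ?mul1g //; exact: cZ.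
  under eq_bigr => x hx do rewrite (e x hx).
  by rewrite sum_nat_const card_rcoset oZ dvdn_mulr.
have n32 : (32%:R == - 32%:R :> algC) = false.
  by apply/negbTE; rewrite -subr_eq0 opprK -natrD pnatr_eq0.
have Tj j : j != 0 -> T j = 32%:R - 64%:R *+ (T j == - 32%:R).
  move=> nj; have := T2 j nj; move/eqP.
  rewrite -[1024%N]/(32 * 32)%N natrM -expr2 eqf_sqr.
  case/orP => /eqP ->; rewrite ?n32 ?eqxx /=; first by rewrite mulr0n subr0.
  by rewrite mulr1n; ring.
have T0 : T 0 = 128%:R.
  rewrite /T irr0 -oG -sumr_const; apply: eq_bigr => x Gx.
  by rewrite cfun1E sq.
have nIrr : #|predC1 (0 : Iirr 'Z(G)%G)| = 7%N.
  rewrite cardC1 card_ord NirrE.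
  by have := center_abelian G; rewrite card_classes_abelian oZ => /eqP ->.
have E := sumT; rewrite (bigD1 0) //= T0 (eq_bigr _ Tj) sumrB in E.
rewrite sumr_const nIrr sumrMnr in E.
move: E; move: (\sum_(i | i != 0%R) nat_of_bool (T i == - 32%:R)%R)%N => b E.
rewrite -!mulrnA in E.
have E2 : (1 *+ (8 * N1 + 64 * b) : algC) = 1 *+ (128 + 32 * 7).
  by rewrite mulrnDr -E addrA subrK mulrnDr.
move/eqP: E2; rewrite eqr_nat => /eqP E3.
by move: d8 E3; lia.
Qed.

Local Close Scope ring_scope.

Theorem lemma3p4 (gT : finGroupType) (G : {group gT}) :
  #|G| = 128 -> rdim_le G 10.
Proof.
move=> oG.
have pG : (2.-group G)%g by rewrite /pgroup oG.
set Z := 'Z(G)%g; set O := 'Ohm_1(Z)%g.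
have sOZ : O \subset Z := Ohm_sub 1 Z.
have dZ : (#|Z| %| 128)%N by rewrite -oG cardSg // center_sub.
have dOZ : (#|O| %| #|Z|)%N := cardSg sOZ.
have logOZ : (logn 2 #|O| <= logn 2 #|Z|)%N := dvdn_leq_log _ (cardG_gt0 Z) dOZ.
have dd i : (Num.truncn ('chi[G]_i 1%g) %| 128)%N /\
   (Num.truncn ('chi[G]_i 1%g) * Num.truncn ('chi[G]_i 1%g) * #|Z| <= 128)%N.
  by have [_ [h1 h2]] := deg_facts i; rewrite -oG.
have [s [hs1 hs2]] := greedy pG (subset_trans sOZ (center_sub G)).
have [hZ8|hZ8] := eqVneq #|Z| 8%N; last first.
  apply: (assemble pG hs2); apply: (sum_bound (m := logn 2 #|Z|)).
    exact: leq_trans hs1 logOZ.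
  move=> i _; have [h1 h2] := dd i; rewrite mulnC; exact: ar1.
have d4 i : (Num.truncn ('chi[G]_i 1%g) <= 4)%N.
  by have [h1 h2] := dd i; rewrite hZ8 in h2; exact: ar2.
have [hO8|hO8] := eqVneq #|O| 8%N; last first.
  apply: (assemble pG hs2); apply: (sum_bound (m := 2)).
    by apply: leq_trans hs1 _; apply: ar4 => //; rewrite hZ8 in dOZ.
  by move=> i _; apply: leq_trans (leq_mul (d4 i) (leqnn 2)) _.
have EOZ : O = Z by apply/eqP; rewrite eqEcard sOZ hO8 hZ8 /=.
have [i0 /andP[hi1 hi2] | nob] := pickP (fun i => ~~ (Z \subset cfker ('chi[G]_i)%R) && (Num.truncn (('chi[G]_i)%R 1%g) <= 2)%N).
  pose K0 := (O :&: cfker ('chi[G]_i0)%R)%G.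
  have sK0 : K0 \subset G by apply: subset_trans (subsetIl _ _) (subset_trans sOZ (center_sub G)).
  have [s' [hs1' hs2']] := greedy pG sK0.
  apply: (assemble (s := i0 :: s') pG).
    by rewrite big_cons setIA.
  rewrite big_cons.
  have -> : 10%N = (2 + 8)%N by [].
  apply: leq_add => //; apply: (sum_bound (m := 2)).
    apply: leq_trans hs1' _; apply: ar4.
      by rewrite -hO8 cardSg // subsetIl.
    rewrite -hO8; apply: contra hi1 => /eqP hc.
    have : O \subset cfker ('chi[G]_i0)%R.
      have hK : K0 :=: O by apply/eqP; rewrite eqEcard subsetIl hc leqnn.
      by rewrite -hK subsetIr.
    by rewrite EOZ.
  by move=> i _; apply: leq_trans (leq_mul (d4 i) (leqnn 2)) _.
exfalso; apply: (bad_case oG hZ8).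
  have : (2.-abelem O)%g := Ohm1_abelem (pgroupS (center_sub G) pG) (center_abelian G).
  case/(abelemP (isT : prime 2)) => _ H z hz; have hz' : z \in Z := hz; rewrite -EOZ in hz'; exact: H.
move=> i hi; have := nob i; rewrite /= hi /= => /negbT; by rewrite -ltnNge.
Qed.
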